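(* In the Poisson algebra $\mathbb C[\mathfrak Z_d]$ one has, for all $r,s$ for which the elements are defined, $\{a_r,a_s\}=0$, $\{a_r,b_s\}=r\,b_{r+s-1}$, and for $r\ge s$, $\{b_r,b_s\}=\sum_{m=s}^{r-1}b_m b_{r+s-m-1}$.
   Context: Let $V=\mathbb C^d$. Let $\mathfrak a=(\mathfrak{gl}(V)\ltimes V)\oplus(\mathfrak{gl}(V)\ltimes V^* )$ with basis $e_{ij}$ (standard matrix units of the first copy of $\mathfrak{gl}(V)$), $e'_{ij}$ (standard matrix units of the second copy), $q_i$ (a basis of $V$), $p_i$ (a basis of $V^*$), $1\le i,j\le d$, with brackets the standard $\mathfrak{gl}$ brackets among the $e_{ij}$ and among the $e'_{ij}$, $[e_{ij},q_k]=\delta_{jk}q_i$, $[e'_{ij},p_k]=-\delta_{ki}p_j$, and all other brackets of basis elements ($[e_{ij},e'_{kl}],[e_{ij},p_k],[e'_{ij},q_k],[p_k,q_l],[q_k,q_l],[p_k,p_l]$) zero. The symmetric algebra $S(\mathfrak a)=\mathbb C[\mathfrak a^*]$ carries the Lie–Poisson bracket. Let $\mathfrak{gl}(V)_{\rm diag}$ be spanned by $e_{ij}+e'_{ij}$. Define the Poisson algebra (Hamiltonian reduction) $\mathbb C[\mathfrak Z_d]:=\big(S(\mathfrak a)/S(\mathfrak a)\mathfrak{gl}(V)_{\rm diag}\big)^{\mathfrak{gl}(V)_{\rm diag}}$ with the induced bracket; it is identified with $\mathbb C[e_{ij},q_i,p_i]^{\mathfrak{gl}(V)}$. Set $a_r=\sum_{i_1,\dots,i_r}e_{i_1i_2}e_{i_2i_3}\cdots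 e_{i_ri_1}$ ($r\ge1$) and $b_s=\sum_{i_1,\dots,i_{s+1}}p_{i_1}e_{i_1i_2}\cdots e_{i_si_{s+1}}q_{i_{s+1}}$ ($s\ge 0$). *)

(* Defs.v *)
From HB Require Import structures.
From mathcomp Require Import all_boot all_order all_algebra.
From mathcomp Require Import mpoly.
Set Implicit Arguments. Unset Strict Implicit. Unset Printing Implicit Defensive.
Import Order.TTheory GRing.Theory Num.Theory.
Local Open Scope ring_scope.

(* Basis of the Lie algebra a = (gl(V) ⋉ V) ⊕ (gl(V) ⋉ V^* ), V = C^d:
   e_ij, e'_ij, q_i, p_i  (indices 0..d-1). *)
Definition avar (d : nat) : finType :=
  ((('I_d * 'I_d) + ('I_d * 'I_d)) + ('I_d + 'I_d))%type.
Definition vE  {d} (i j : 'I_d) : avar d := inl (inl (i, j)).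
Definition vE' {d} (i j : 'I_d) : avar d := inl (inr (i, j)).
Definition vQ  {d} (i : 'I_d) : avar d := inr (inl i).
Definition vP  {d} (i : 'I_d) : avar d := inr (inr i).

Definition rvar (d : nat) : finType := (('I_d * 'I_d) + ('I_d + 'I_d))%type.
Definition rE {d} (i j : 'I_d) : rvar d := inl (i, j).
Definition rQ {d} (i : 'I_d) : rvar d := inr (inl i).
Definition rP {d} (i : 'I_d) : rvar d := inr (inr i).

(* S(a) = C[a^*] : polynomials in #|avar d| variables;
   C[e,q,p] : polynomials in #|rvar d| variables. *)
Definition Sa (C : numClosedFieldType) (d : nat) := {mpoly C[#|avar d|]}.
Definition Sr (C : numClosedFieldType) (d : nat) := {mpoly C[#|rvar d|]}.

Definition xa {C : numClosedFieldType} {d} (x : avar d) : Sa C d :=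
  'X_(enum_rank x).
Definition xr {C : numClosedFieldType} {d} (y : rvar d) : Sr C d :=
  'X_(enum_rank y).

Definition kd {C : numClosedFieldType} {d} (i j : 'I_d) : C :=
  if i == j then 1 else 0.

(* Lie bracket of basis elements of a, as (linear) elements of S(a). *)
Definition abr {C : numClosedFieldType} {d} (x y : avar d) : Sa C d :=
  match x, y with
  | inl (inl (i, j)), inl (inl (k, l)) =>
      (kd j k) *: xa (vE i l) - (kd l i) *: xa (vE k j)
  | inl (inr (i, j)), inl (inr (k, l)) =>
      (kd j k) *: xa (vE' i l) - (kd l i) *: xa (vE' k j)
  | inl (inl (i, j)), inr (inl k) => (kd j k) *: xa (vQ i)
  | inr (inl k), inl (inl (i, j)) => - ((kd j k) *: xa (vQ i))
  | inl (inr (i, j)), inr (inr k) => - ((kd k i) *: xa (vP j))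
  | inr (inr k), inl (inr (i, j)) => (kd k i) *: xa (vP j)
  | _, _ => 0
  end.

(* Lie–Poisson bracket on S(a):  {f,g} = sum_{x,y} [x,y] df/dx dg/dy. *)
Definition LP {C : numClosedFieldType} {d} (f g : Sa C d) : Sa C d :=
  \sum_(x : avar d) \sum_(y : avar d)
     abr x y * (mderiv (enum_rank x) f * mderiv (enum_rank y) g).

Definition incl_var {C : numClosedFieldType} {d} (k : 'I_#|rvar d|) : Sa C d :=
  match enum_val k with
  | inl (i, j) => xa (vE i j)
  | inr (inl i) => xa (vQ i)
  | inr (inr i) => xa (vP i)
  end.
Definition incl {C : numClosedFieldType} {d} (f : Sr C d) : Sa C d :=
  mmap (@mpolyC _ C) incl_var f.

(* Quotient map S(a) -> S(a)/S(a) gl(V)_diag  identified with C[e,q,p]: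
   e_ij |-> e_ij, e'_ij |-> -e_ij (since e_ij + e'_ij = 0), q |-> q, p |-> p. *)
Definition proj_var {C : numClosedFieldType} {d} (k : 'I_#|avar d|) : Sr C d :=
  match enum_val k with
  | inl (inl (i, j)) => xr (rE i j)
  | inl (inr (i, j)) => - xr (rE i j)
  | inr (inl i) => xr (rQ i)
  | inr (inr i) => xr (rP i)
  end.
Definition proj {C : numClosedFieldType} {d} (F : Sa C d) : Sr C d :=
  mmap (@mpolyC _ C) proj_var F.

(* Induced (reduced) Poisson bracket on C[Z_d] = C[e,q,p]^{gl(V)}:
   lift to S(a), take the Lie–Poisson bracket, project to the quotient. *)
Definition rbr {C : numClosedFieldType} {d} (f g : Sr C d) : Sr C d :=
  proj (LP (incl f) (incl g)).

Definition a_ {C : numClosedFieldType} {d} (r : nat) : Sr C d :=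
  \sum_(f : {ffun 'I_r -> 'I_d}) \prod_(k < r) xr (rE (f k) (f (ordS k))).

Definition b_ {C : numClosedFieldType} {d} (s : nat) : Sr C d :=
  \sum_(f : {ffun 'I_s.+1 -> 'I_d})
     xr (rP (f ord0)) *
     (\prod_(k < s) xr (rE (f (widen_ord (leqnSn s) k)) (f (lift ord0 k)))) *
     xr (rQ (f ord_max)).

(* Main.v *)
Require Import Defs.
From HB Require Import structures.
From mathcomp Require Import all_boot all_order all_algebra.
From mathcomp Require Import mpoly.
From mathcomp Require Import ring zify.
Import GRing.Theory.
Local Open Scope ring_scope.
Set Implicit Arguments. Unset Strict Implicit.

Definition pwr (R : comNzRingType) n (E : 'M[R]_n) k : 'M[R]_n := iter k (mulmx E) 1%:M.

Definition fcons (T : Type) n (x : T) (g : {ffun 'I_n -> T}) : {ffun 'I_n.+1 -> T} :=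
  [ffun k : 'I_n.+1 => if unlift ord0 k is Some k' then g k' else x].

Lemma fcons0 (T : Type) n (x : T) (g : {ffun 'I_n -> T}) : fcons x g ord0 = x.
Proof. by rewrite ffunE unlift_none. Qed.
Lemma fconsS (T : Type) n (x : T) (g : {ffun 'I_n -> T}) k : fcons x g (lift ord0 k) = g k.
Proof. by rewrite ffunE liftK. Qed.

Lemma sum_ffunS (V : nmodType) (T : finType) n (F : {ffun 'I_n.+1 -> T} -> V) :
  \sum_f F f = \sum_(x : T) \sum_(g : {ffun 'I_n -> T}) F (fcons x g).
Proof.
rewrite pair_big /=.
rewrite (reindex (fun p : T * {ffun 'I_n -> T} => fcons p.1 p.2)) //=.
exists (fun f => (f ord0, [ffun k => f (lift ord0 k)])) => [[x g] _|f _] /=.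
  rewrite fcons0; congr (_, _); apply/ffunP => k; by rewrite ffunE fconsS.
apply/ffunP => k; rewrite ffunE; case: unliftP => [k'|] -> //.
by rewrite ffunE.
Qed.

Lemma sum_ffun0 (V : nmodType) (T : finType) (c : V) :
  \sum_(g : {ffun 'I_0 -> T}) c = c.
Proof. by rewrite sumr_const card_ffun card_ord expn0. Qed.

Section Path.
Variables (R : comNzRingType) (d : nat) (e : 'I_d -> 'I_d -> R).
Definition Emx : 'M[R]_d := \matrix_(i, j) e i j.

Lemma sum_delta (H : 'I_d -> R) i : \sum_j H j * (1 *+ (i == j)) = H i.
Proof.
rewrite (bigD1 i) //= eqxx mulr1n mulr1 big1 ?addr0 // => j /negbTE.
by rewrite eq_sym => ->; rewrite mulr0n mulr0.
Qed.

Lemma path_sum n (H : 'I_d -> 'I_d -> R) :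
  \sum_(f : {ffun 'I_n.+1 -> 'I_d}) H (f ord0) (f ord_max) *
     \prod_(k < n) e (f (widen_ord (leqnSn n) k)) (f (lift ord0 k))
  = \sum_i \sum_j H i j * pwr Emx n i j.
Proof.
elim: n H => [|n IH] H.
  rewrite sum_ffunS; apply: eq_bigr => i _.
  have -> : (ord_max : 'I_1) = ord0 by apply/val_inj.
  rewrite (eq_bigr (fun _ => H i i)); last by move=> g _; rewrite fcons0 big_ord0 mulr1.
  rewrite sum_ffun0 /pwr /=.
  by under eq_bigr do rewrite mxE; rewrite sum_delta.
rewrite sum_ffunS; apply: eq_bigr => x _.
have hm : (ord_max : 'I_n.+2) = lift ord0 (ord_max : 'I_n.+1) by apply/val_inj.
transitivity (\sum_(g : {ffun 'I_n.+1 -> 'I_d})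
   (fun j l => H x l * e x j) (g ord0) (g ord_max) *
     \prod_(k < n) e (g (widen_ord (leqnSn n) k)) (g (lift ord0 k))).
  apply: eq_bigr => g _; rewrite hm fcons0 fconsS big_ord_recl /=.
  have -> : widen_ord (leqnSn n.+1) ord0 = ord0 by apply/val_inj.
  rewrite fcons0 fconsS mulrA; congr (_ * _).
  apply: eq_bigr => k _.
  have -> : widen_ord (leqnSn n.+1) (lift ord0 k) = lift ord0 (widen_ord (leqnSn n) k)
    by apply/val_inj.
  by rewrite !fconsS.
rewrite (IH (fun j l => H x l * e x j)) /= exchange_big; apply: eq_bigr => l _.
rewrite mxE mulr_sumr; apply: eq_bigr => j _.
by rewrite mxE -mulrA.
Qed.
End Path.


Lemma pwr_add (R : comNzRingType) n (E : 'M[R]_n) a b :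
  pwr E (a + b) = pwr E a *m pwr E b.
Proof.
elim: a => [|a IH]; first by rewrite add0n mul1mx.
by rewrite addSn /pwr !iterS -/(pwr E _) IH mulmxA.
Qed.

Section Der.
Variables (R : comNzRingType) (D : R -> R).
Hypothesis DD : forall x y, D (x + y) = D x + D y.
Hypothesis DM : forall x y, D (x * y) = x * D y + y * D x.

Lemma D0 : D 0 = 0.
Proof. by apply: (@addrI _ (D 0)); rewrite -DD !addr0. Qed.
Lemma Dsum I (r : seq I) (P : pred I) (F : I -> R) :
  D (\sum_(i <- r | P i) F i) = \sum_(i <- r | P i) D (F i).
Proof. exact: (big_morph D DD D0). Qed.
Lemma D1 : D 1 = 0.
Proof.
have h := DM 1 1; rewrite mulr1 mul1r in h.
by apply: (@addrI _ (D 1)); rewrite -h addr0.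
Qed.
Lemma DMn x k : D (x *+ k) = D x *+ k.
Proof. by elim: k => [|k IH]; rewrite ?D0 // !mulrS DD IH. Qed.
Lemma DN x : D (- x) = - D x.
Proof. by apply: (@addrI _ (D x)); rewrite -DD !subrr D0. Qed.

Definition dmx m p (A : 'M[R]_(m, p)) := map_mx D A.

Lemma dmxM m p q (A : 'M[R]_(m, p)) (B : 'M[R]_(p, q)) :
  dmx (A *m B) = dmx A *m B + A *m dmx B.
Proof.
apply/matrixP => i j; rewrite !mxE Dsum -big_split /=; apply: eq_bigr => k _.
by rewrite !mxE DM addrC mulrC [B k j * _]mulrC.
Qed.

Lemma dmx1 n : dmx (1%:M : 'M[R]_n) = 0.
Proof. by apply/matrixP => i j; rewrite !mxE DMn D1 mul0rn. Qed.

Lemma dtr n (A : 'M[R]_n) : D (\tr A) = \tr (dmx A).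
Proof. by rewrite /mxtrace Dsum; apply: eq_bigr => i _; rewrite mxE. Qed.

Lemma dentry m p (A : 'M[R]_(m, p)) i j : D (A i j) = dmx A i j.
Proof. by rewrite mxE. Qed.

Variables (n : nat) (E : 'M[R]_n).

Lemma dpw_inner W : dmx E = E *m W - W *m E ->
  forall k, dmx (pwr E k) = pwr E k *m W - W *m pwr E k.
Proof.
move=> hE; elim => [|k IH]; first by rewrite /pwr /= dmx1 mul1mx mulmx1 subrr.
rewrite /pwr iterS -/(pwr E k) dmxM hE IH mulmxBl mulmxBr !mulmxA.
by rewrite addrC addrA subrK.
Qed.

Lemma dpw_sum k : dmx (pwr E k) =
  \sum_(m < k) pwr E m *m dmx E *m pwr E (k - m.+1).
Proof.
elim: k => [|k IH]; first by rewrite big_ord0 /pwr /= dmx1.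
rewrite /pwr iterS -/(pwr E k) dmxM IH big_ord_recl /= mul1mx subSS subn0.
congr (_ + _); rewrite mulmx_sumr; apply: eq_bigr => m _.
by rewrite /bump /= add1n subSS !mulmxA.
Qed.
End Der.

Lemma mderivXv (C : comNzRingType) n (i j : 'I_n) :
  mderiv i ('X_j : {mpoly C[n]}) = (j == i)%:R.
Proof.
rewrite mderivX mnm1E; case: eqP => [->|_]; last by rewrite scale0r.
have ->: (U_(i) - U_(i) = 0)%MM by apply/mnmP => k; rewrite mnmBE mnm0E subnn.
by rewrite mpolyX0 scale1r.
Qed.

Section S.
Variables (C : numClosedFieldType) (d : nat).
Local Notation R := (Sr C d).
Local Notation A := (Sa C d).

Lemma inclM (f g : R) : incl (f * g) = incl f * incl g.
Proof. by rewrite /incl rmorphM. Qed.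
Lemma projM (f g : A) : proj (f * g) = proj f * proj g.
Proof. by rewrite /proj rmorphM. Qed.
Lemma inclD (f g : R) : incl (f + g) = incl f + incl g.
Proof. by rewrite /incl rmorphD. Qed.
Lemma projD (f g : A) : proj (f + g) = proj f + proj g.
Proof. by rewrite /proj rmorphD. Qed.
Lemma projN (f : A) : proj (- f) = - proj f.
Proof. by rewrite /proj rmorphN. Qed.
Lemma proj0 : proj (0 : A) = 0.
Proof. by rewrite /proj rmorph0. Qed.
Lemma projZ c (f : A) : proj (c *: f) = c *: proj f.
Proof. by rewrite /proj mmapZ /= mul_mpolyC. Qed.
Lemma projX k : proj ('X_k : A) = proj_var k.
Proof. by rewrite /proj mmapX mmap1U. Qed.
Lemma inclX k : incl ('X_k : R) = incl_var k.
Proof. by rewrite /incl mmapX mmap1U. Qed.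

Lemma proj_incl_var k : proj (incl_var k : A) = 'X_k.
Proof.
rewrite /incl_var; case E: (enum_val k) => [[a b]|[a|a]];
  by rewrite /xa projX /proj_var enum_rankK /xr /= /rE /rQ /rP -E enum_valK.
Qed.

Lemma proj_incl (f : R) : proj (incl f) = f.
Proof.
elim/mpolyind: f => [|c m p _ _ IH]; first by rewrite /incl rmorph0 proj0.
rewrite inclD projD IH; congr (_ + _).
rewrite /incl mmapZ mmapX /= projM /proj mmapC /= mul_mpolyC; congr (_ *: _).
rewrite /mmap1 rmorph_prod /= mpolyXE_id; apply: eq_bigr => i _.
by rewrite rmorphXn /= -/(proj _) proj_incl_var.
Qed.

Lemma LPMl (F G H : A) : LP (F * G) H = F * LP G H + G * LP F H.
Proof.
rewrite /LP !mulr_sumr -big_split; apply: eq_bigr => x _.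
rewrite !mulr_sumr -big_split; apply: eq_bigr => y _.
rewrite mderivM mulrDl mulrDr [in LHS]addrC; congr GRing.add.
  ring.
ring.
Qed.
Lemma LPMr (F G H : A) : LP F (G * H) = G * LP F H + H * LP F G.
Proof.
rewrite /LP !mulr_sumr -big_split; apply: eq_bigr => x _.
rewrite !mulr_sumr -big_split; apply: eq_bigr => y _.
rewrite mderivM mulrDr mulrDr [in LHS]addrC; congr GRing.add.
  ring.
ring.
Qed.
Lemma LPDl (F G H : A) : LP (F + G) H = LP F H + LP G H.
Proof.
rewrite /LP -big_split; apply: eq_bigr => x _.
rewrite -big_split; apply: eq_bigr => y _.
by rewrite mderivD mulrDl mulrDr.
Qed.
Lemma LPDr (F G H : A) : LP F (G + H) = LP F G + LP F H.
Proof.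
rewrite /LP -big_split; apply: eq_bigr => x _.
rewrite -big_split; apply: eq_bigr => y _.
by rewrite mderivD mulrDr mulrDr.
Qed.

Lemma rbrMl (f g h : R) : rbr (f * g) h = f * rbr g h + g * rbr f h.
Proof.
rewrite /rbr inclM LPMl projD; congr (_ + _).
  by rewrite (projM (incl f)) proj_incl.
by rewrite (projM (incl g)) proj_incl.
Qed.
Lemma rbrMr (f g h : R) : rbr f (g * h) = g * rbr f h + h * rbr f g.
Proof.
rewrite /rbr inclM LPMr projD; congr (_ + _).
  by rewrite (projM (incl g)) proj_incl.
by rewrite (projM (incl h)) proj_incl.
Qed.
Lemma rbrDl (f g h : R) : rbr (f + g) h = rbr f h + rbr g h.
Proof. by rewrite /rbr inclD LPDl projD. Qed.
Lemma rbrDr (f g h : R) : rbr f (g + h) = rbr f g + rbr f h.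
Proof. by rewrite /rbr inclD LPDr projD. Qed.

Lemma LPX (x0 y0 : avar d) : LP (xa x0) (xa y0) = abr x0 y0 :> A.
Proof.
rewrite /LP /xa (bigD1 x0) //= [X in _ + X]big1 ?addr0; last first.
  move=> x /negbTE nx; apply: big1 => y _.
  by rewrite mderivXv (inj_eq enum_rank_inj) eq_sym nx mul0r mulr0.
rewrite (bigD1 y0) //= [X in _ + X]big1 ?addr0; last first.
  move=> y /negbTE ny.
  by rewrite !mderivXv !(inj_eq enum_rank_inj) (eq_sym y0) ny mulr0 mulr0.
by rewrite !mderivXv !eqxx mulr1 mulr1.
Qed.

Definition iota (u : rvar d) : avar d :=
  match u with
  | inl (i, j) => vE i j
  | inr (inl i) => vQ i
  | inr (inr i) => vP i
  end.

Lemma incl_xr u : incl (xr u : R) = xa (iota u).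
Proof. by rewrite /xr inclX /incl_var enum_rankK; case: u => [[a b]|[a|a]]. Qed.

Lemma rbr_gen u v : rbr (xr u : R) (xr v) = proj (abr (iota u) (iota v)).
Proof. by rewrite /rbr !incl_xr LPX. Qed.

Lemma proj_xa x : proj (xa x : A) = match x with
  | inl (inl (i, j)) => xr (rE i j)
  | inl (inr (i, j)) => - xr (rE i j)
  | inr (inl i) => xr (rQ i)
  | inr (inr i) => xr (rP i)
  end.
Proof. by rewrite /xa projX /proj_var enum_rankK. Qed.

Local Notation e i j := (xr (rE i j) : R).
Local Notation q i := (xr (rQ i) : R).
Local Notation p i := (xr (rP i) : R).

Lemma br_ee i j k l : rbr (e i j) (e k l) = kd j k *: e i l - kd l i *: e k j.
Proof. by rewrite rbr_gen /= projD projN !projZ !proj_xa. Qed.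
Lemma br_eq i j k : rbr (e i j) (q k) = kd j k *: q i.
Proof. by rewrite rbr_gen /= projZ proj_xa. Qed.
Lemma br_qe k i j : rbr (q k) (e i j) = - (kd j k *: q i).
Proof. by rewrite rbr_gen /= projN projZ proj_xa. Qed.
Lemma br_ep i j k : rbr (e i j) (p k) = 0.
Proof. by rewrite rbr_gen /= proj0. Qed.
Lemma br_qq k l : rbr (q k) (q l) = 0.
Proof. by rewrite rbr_gen /= proj0. Qed.
Lemma br_qp k l : rbr (q k) (p l) = 0.
Proof. by rewrite rbr_gen /= proj0. Qed.
Lemma br_pv k v : rbr (p k) (xr v) = 0.
Proof. by rewrite rbr_gen; case: v => [[a b]|[a|a]] /=; rewrite proj0. Qed.
End S.

Section MxH.
Variable (R : comNzRingType).
Lemma mul_mx_deltaE m n p (A : 'M[R]_(m, n)) (a : 'I_n) (b : 'I_p) i j :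
  (A *m delta_mx a b) i j = (j == b)%:R * A i a.
Proof.
rewrite mxE (bigD1 a) //= [X in _ + X]big1 ?addr0.
  by rewrite mxE eqxx /= mulrC.
by move=> k /negbTE nk; rewrite mxE nk /= mulr0.
Qed.
Lemma mul_delta_mxE m n p (a : 'I_m) (b : 'I_n) (A : 'M[R]_(n, p)) i j :
  (delta_mx a b *m A) i j = (i == a)%:R * A b j.
Proof.
rewrite mxE (bigD1 b) //= [X in _ + X]big1 ?addr0.
  by rewrite mxE eqxx andbT.
by move=> k /negbTE nk; rewrite mxE nk andbF mul0r.
Qed.
Lemma mx11E n (u : 'M[R]_(1, n)) (x : 'cV[R]_n) (y : 'rV[R]_n) (w : 'M[R]_(n, 1)) :
  (u *m x *m y *m w) 0 0 = (u *m x) 0 0 * (y *m w) 0 0.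
Proof. by rewrite -mulmxA mxE big_ord1. Qed.
Lemma tr11 (A : 'M[R]_1) : \tr A = A 0 0.
Proof. by rewrite /mxtrace big_ord1. Qed.
End MxH.

Section Main.
Variables (C : numClosedFieldType) (d : nat).
Local Notation R := (Sr C d).
Definition eF (i j : 'I_d) : R := xr (rE i j).
Local Notation E := (Emx eF).
Definition qv : 'cV[R]_d := \col_i xr (rQ i).
Definition pv : 'rV[R]_d := \row_i xr (rP i).
Local Notation P := (pwr E).
Definition bb k := (pv *m P k *m qv) 0 0.

Lemma kdZ (i j : 'I_d) (x : R) : kd i j *: x = (i == j)%:R * x.
Proof. by rewrite /kd; case: eqP => _; rewrite ?scale1r ?scale0r ?mul1r ?mul0r. Qed.

Lemma a_tr r : a_ r.+1 = \tr (P r.+1) :> R.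
Proof.
rewrite /a_.
transitivity (\sum_(f : {ffun 'I_r.+1 -> 'I_d}) (fun i j => eF j i) (f ord0) (f ord_max) *
     \prod_(k < r) eF (f (widen_ord (leqnSn r) k)) (f (lift ord0 k))).
  apply: eq_bigr => f _; rewrite big_ord_recr /= mulrC; congr (_ * _).
    rewrite /eF; congr (xr (rE _ _)); congr (f _); apply/val_inj => /=.
    by rewrite modnn.
  apply: eq_bigr => k _; rewrite /eF; congr (xr (rE _ _)); congr (f _); apply/val_inj => /=.
  by rewrite modn_small // ltnS.
rewrite (@path_sum _ _ eF r (fun i j => eF j i)) exchange_big /mxtrace; apply: eq_bigr => j _.
rewrite /pwr iterS -/(pwr _ r) mxE; apply: eq_bigr => i _.
by rewrite mxE.
Qed.

Lemma b_bb s : b_ s = bb s.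
Proof.
rewrite /b_.
transitivity (\sum_(f : {ffun 'I_s.+1 -> 'I_d})
   (fun i j => xr (rP i) * xr (rQ j) : R) (f ord0) (f ord_max) *
     \prod_(k < s) eF (f (widen_ord (leqnSn s) k)) (f (lift ord0 k))).
  by apply: eq_bigr => f _; rewrite /= mulrAC.
rewrite (@path_sum _ _ eF s (fun i j => xr (rP i) * xr (rQ j))) /bb mxE exchange_big; apply: eq_bigr => j _.
rewrite !mxE mulr_suml; apply: eq_bigr => i _.
by rewrite !mxE mulrAC.
Qed.

Definition Dl (h : R) := fun x : R => rbr x h.
Definition Dr (h : R) := fun x : R => rbr h x.
Lemma DlD h x y : Dl h (x + y) = Dl h x + Dl h y. Proof. exact: rbrDl. Qed.
Lemma DlM h x y : Dl h (x * y) = x * Dl h y + y * Dl h x. Proof. exact: rbrMl. Qed.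
Lemma DrD h x y : Dr h (x + y) = Dr h x + Dr h y. Proof. exact: rbrDr. Qed.
Lemma DrM h x y : Dr h (x * y) = x * Dr h y + y * Dr h x. Proof. exact: rbrMr. Qed.

Section Gen.
Variable (D : R -> R).
Hypothesis DD : forall x y, D (x + y) = D x + D y.
Hypothesis DM : forall x y, D (x * y) = x * D y + y * D x.

Lemma db_form (u : 'rV[R]_d) (M : 'M[R]_d) (w : 'cV[R]_d) :
  D ((u *m M *m w) 0 0) =
  (dmx D u *m M *m w + u *m dmx D M *m w + u *m M *m dmx D w) 0 0.
Proof. by rewrite dentry !(dmxM DD DM) mulmxDl. Qed.

Lemma pw_zero : dmx D E = 0 -> forall k, dmx D (P k) = 0.
Proof.
move=> h k; have h' : dmx D E = E *m 0 - 0 *m E by rewrite h mulmx0 mul0mx subrr.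
by rewrite (dpw_inner DD DM h') mulmx0 mul0mx subrr.
Qed.

Lemma tr_inner W : dmx D E = E *m W - W *m E -> forall k, D (\tr (P k)) = 0.
Proof.
move=> h k; rewrite (dtr DD) (dpw_inner DD DM h) linearB /= mxtrace_mulC.
by rewrite subrr.
Qed.
End Gen.

Lemma mxBE m n (A B : 'M[R]_(m, n)) i j : (A - B) i j = A i j - B i j.
Proof. by rewrite !mxE. Qed.

Local Notation q k := (xr (rQ k) : R).
Local Notation p k := (xr (rP k) : R).

Lemma dE_l_e k l : dmx (Dl (eF k l)) E = E *m delta_mx l k - delta_mx l k *m E.
Proof.
apply/matrixP => i j; rewrite mxBE mul_mx_deltaE mul_delta_mxE !mxE /Dl /eF br_ee !kdZ.
by rewrite (eq_sym l i).
Qed.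
Lemma dq_l_e k l : dmx (Dl (eF k l)) qv = - (delta_mx l k *m qv).
Proof.
apply/matrixP => i j; rewrite [RHS]mxE mul_delta_mxE !mxE /Dl br_qe kdZ.
by rewrite (eq_sym l i).
Qed.
Lemma dp_l v : dmx (Dl (xr v)) pv = 0.
Proof. by apply/matrixP => i j; rewrite !mxE /Dl br_pv. Qed.
Lemma dE_l_q k : dmx (Dl (q k)) E = qv *m delta_mx 0 k.
Proof. by apply/matrixP => i j; rewrite mul_mx_deltaE !mxE /Dl /eF br_eq kdZ. Qed.
Lemma dq_l_q k : dmx (Dl (q k)) qv = 0.
Proof. by apply/matrixP => i j; rewrite !mxE /Dl br_qq. Qed.
Lemma dE_l_p k : dmx (Dl (p k)) E = 0.
Proof. by apply/matrixP => i j; rewrite !mxE /Dl /eF br_ep. Qed.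
Lemma dq_l_p k : dmx (Dl (p k)) qv = 0.
Proof. by apply/matrixP => i j; rewrite !mxE /Dl br_qp. Qed.
Lemma dE_r_e i j : dmx (Dr (eF i j)) E = delta_mx j i *m E - E *m delta_mx j i.
Proof.
apply/matrixP => k l; rewrite mxBE mul_mx_deltaE mul_delta_mxE !mxE /Dr /eF br_ee !kdZ.
by rewrite (eq_sym j k).
Qed.
End Main.

Section Main2.
Variables (C : numClosedFieldType) (d : nat).
Local Notation R := (Sr C d).
Local Notation eF := (@eF C d).
Local Notation E := (Emx eF).
Local Notation qv := (@qv C d).
Local Notation pv := (@pv C d).
Local Notation P := (pwr E).
Local Notation bb := (@bb C d).
Local Notation q k := (xr (rQ k) : R).
Local Notation p k := (xr (rP k) : R).
Local Notation Dl := (@Dl C d).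
Local Notation Dr := (@Dr C d).

Lemma L_e_a i j s : rbr (eF i j) (a_ s.+1) = 0.
Proof.
rewrite a_tr; apply: (tr_inner (DrD _) (DrM _) (W := - delta_mx j i)).
by rewrite dE_r_e mulmxN mulNmx opprK [RHS]addrC.
Qed.

Lemma L_a_e r k l : rbr (a_ r.+1) (eF k l) = 0.
Proof.
rewrite a_tr; apply: (tr_inner (DlD _) (DlM _) (W := delta_mx l k)).
exact: dE_l_e.
Qed.

Lemma L_a_p r k : rbr (a_ r.+1) (p k) = 0.
Proof.
rewrite a_tr; apply: (tr_inner (DlD _) (DlM _) (W := 0)).
by rewrite dE_l_p mulmx0 mul0mx subrr.
Qed.

Lemma L_a_q r k : rbr (a_ r.+1) (q k) = r.+1%:R * (P r *m qv) k 0.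
Proof.
rewrite a_tr; rewrite -/(Dl (q k) _) (dtr (DlD _)) (dpw_sum (DlD _) (DlM _)) dE_l_q.
rewrite linear_sum /=.
rewrite (eq_bigr (fun _ => (P r *m qv) k 0)); last first.
  move=> m _.
  have -> : P m *m (qv *m delta_mx 0 k) *m P (r.+1 - m.+1)
      = (P m *m qv) *m (delta_mx 0 k *m P (r.+1 - m.+1)) by rewrite !mulmxA.
  rewrite mxtrace_mulC tr11.
  have -> : (delta_mx 0 k : 'rV[R]_d) *m P (r.+1 - m.+1) *m (P m *m qv)
      = (delta_mx 0 k : 'rV[R]_d) *m (P (r.+1 - m.+1) *m P m) *m qv by rewrite !mulmxA.
  rewrite -pwr_add.
  have -> : (r.+1 - m.+1 + m = r)%N by case: m => m /= hm; rewrite subSS subnK // -ltnS.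
  by rewrite -mulmxA mul_delta_mxE eqxx mul1r.
by rewrite sumr_const card_ord mulr_natl.
Qed.

Lemma claim1 r s : rbr (a_ r.+1 : R) (a_ s.+1) = 0.
Proof.
transitivity (Dl (a_ s.+1) (\tr (P r.+1))); first by rewrite /Dl -a_tr.
rewrite (dtr (DlD _)) (pw_zero (DlD _) (DlM _)) ?mxtrace0 //.
by apply/matrixP => i j; rewrite !mxE /Dl L_e_a.
Qed.

Lemma claim2 r s : rbr (a_ r.+1 : R) (b_ s) = r.+1%:R * b_ (r + s).
Proof.
rewrite (@b_bb C d s) (@b_bb C d (r + s)).
rewrite -/(Dr (a_ r.+1) _) /bb (db_form (DrD _) (DrM _)).
have hp : dmx (Dr (a_ r.+1)) pv = 0 by apply/matrixP => i j; rewrite !mxE /Dr L_a_p.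
have hE : dmx (Dr (a_ r.+1)) E = 0 by apply/matrixP => i j; rewrite !mxE /Dr L_a_e.
have hq : dmx (Dr (a_ r.+1)) qv = r.+1%:R *: (P r *m qv).
  apply/matrixP => i j; rewrite (ord1 j) [RHS]mxE [LHS]mxE [in LHS]mxE.
  by rewrite /Dr L_a_q.
rewrite hp (pw_zero (DrD _) (DrM _) hE) hq !mul0mx !mulmx0 !mul0mx !add0r -scalemxAr mxE.
by rewrite mulmxA -[pv *m P s *m P r]mulmxA -pwr_add (addnC s r).
Qed.

Lemma row_delta_mulE (u : 'rV[R]_d) (l k : 'I_d) (M : 'cV[R]_d) :
  (u *m delta_mx l k *m M) 0 0 = u 0 l * M k 0.
Proof.
rewrite -mulmxA mxE (bigD1 l) //= mul_delta_mxE eqxx mul1r big1 ?addr0 //.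
by move=> j /negbTE nj; rewrite mul_delta_mxE nj mul0r mulr0.
Qed.

Lemma L_b_e r k l : rbr (b_ r : R) (eF k l) = - ((P r *m qv) k 0 * pv 0 l).
Proof.
rewrite (@b_bb C d r) -/(Dl (eF k l) _) /bb (db_form (DlD _) (DlM _)).
rewrite dp_l (dpw_inner (DlD _) (DlM _) (@dE_l_e C d k l)) dq_l_e.
rewrite !mul0mx add0r mulmxBr mulmxBl mulmxN !mulmxA addrAC subrr add0r mxE.
by rewrite -[_ *m P r *m qv]mulmxA row_delta_mulE mulrC.
Qed.

Lemma L_b_q r k : rbr (b_ r : R) (q k) = \sum_(m < r) bb m * (P (r - m.+1) *m qv) k 0.
Proof.
rewrite (@b_bb C d r) -/(Dl (q k) _) /bb (db_form (DlD _) (DlM _)).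
rewrite dp_l dq_l_q (dpw_sum (DlD _) (DlM _)) dE_l_q !mul0mx add0r mulmx0 addr0.
rewrite mulmx_sumr mulmx_suml summxE; apply: eq_bigr => m _.
have -> : pv *m (P m *m (qv *m delta_mx 0 k) *m P (r - m.+1)) *m qv
   = pv *m P m *m qv *m delta_mx 0 k *m (P (r - m.+1) *m qv) by rewrite !mulmxA.
by rewrite mx11E mul_delta_mxE eqxx mul1r.
Qed.

Lemma L_b_p r k : rbr (b_ r : R) (p k) = 0.
Proof.
rewrite (@b_bb C d r) -/(Dl (p k) _) /bb (db_form (DlD _) (DlM _)).
rewrite dp_l dq_l_p (pw_zero (DlD _) (DlM _) (@dE_l_p C d k)) !mul0mx !mulmx0 !add0r.
by rewrite mul0mx addr0 mxE.
Qed.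

Lemma claim3_raw r s : rbr (b_ r : R) (b_ s) =
  \sum_(m < s) - (bb (m + r) * bb (s - m.+1)) +
  \sum_(m < r) bb m * bb (s + (r - m.+1)).
Proof.
rewrite (@b_bb C d s) -/(Dr (b_ r) _) /bb (db_form (DrD _) (DrM _)).
have hp : dmx (Dr (b_ r)) pv = 0 by apply/matrixP => i j; rewrite !mxE /Dr L_b_p.
have hE : dmx (Dr (b_ r)) E = - (P r *m qv *m pv).
  apply/matrixP => k l; rewrite [LHS]mxE [in LHS]mxE /Dr L_b_e.
  by rewrite [in RHS]mxE [in RHS]mxE big_ord1.
have hq : dmx (Dr (b_ r)) qv = \sum_(m < r) bb m *: (P (r - m.+1) *m qv).
  apply/matrixP => k j; rewrite (ord1 j) [LHS]mxE [in LHS]mxE /Dr L_b_q summxE.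
  by apply: eq_bigr => m _; rewrite [in RHS]mxE.
rewrite hp hq (dpw_sum (DrD _) (DrM _)) hE !mul0mx add0r mxE.
congr (_ + _).
  rewrite mulmx_sumr mulmx_suml summxE; apply: eq_bigr => m _.
  have -> : pv *m (P m *m - (P r *m qv *m pv) *m P (s - m.+1)) *m qv
     = - (pv *m P (m + r) *m qv *m (pv *m P (s - m.+1) *m qv)).
    by rewrite pwr_add mulmxN mulNmx mulmxN mulNmx !mulmxA.
  by rewrite mxE mxE big_ord1.
rewrite mulmx_sumr summxE; apply: eq_bigr => m _.
by rewrite -scalemxAr mxE mulmxA -[pv *m P s *m _]mulmxA -pwr_add.
Qed.

Lemma claim3 r s : (s <= r)%N ->
  rbr (b_ r : R) (b_ s) = \sum_(s <= m < r) b_ m * b_ (r + s - m - 1).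
Proof.
move=> hsr; rewrite claim3_raw sumrN.
transitivity (- (\sum_(m < s) bb (m + r) * bb (s - m.+1)) +
   \sum_(m < r) bb m * bb (s + (r - m.+1))); first by [].
transitivity (\sum_(s <= m < r) bb m * bb (s + (r - m.+1))); last first.
  apply: eq_big_nat => m /andP [h1 h2].
  rewrite (@b_bb C d m) (@b_bb C d (r + s - m - 1)); congr (bb _ * bb _); lia.
move: (bb) => f.
rewrite -(big_mkord xpredT (fun m : nat => f m * f (s + (r - m.+1))%N)).
rewrite -(big_mkord xpredT (fun m : nat => f (m + r)%N * f (s - m.+1)%N)).
rewrite (big_cat_nat (n := s) (p := r)) //=.
have -> : \sum_(0 <= m < s) f m * f (s + (r - m.+1))%N =
          \sum_(0 <= m < s) f (m + r)%N * f (s - m.+1)%N.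
  rewrite big_nat_rev /=.
  apply: eq_big_nat => m /andP [_ hm]; rewrite mulrC; congr (f _ * f _); lia.
by rewrite addKr.
Qed.
End Main2.

Unset Implicit Arguments. Set Strict Implicit.

Theorem proposition3p6 (C : numClosedFieldType) (d : nat) :
  (forall r s : nat, (1 <= r)%N -> (1 <= s)%N ->
     rbr (a_ r : Sr C d) (a_ s) = 0) /\
  (forall r s : nat, (1 <= r)%N ->
     rbr (a_ r : Sr C d) (b_ s) = r%:R * b_ (r + s - 1)) /\
  (forall r s : nat, (s <= r)%N ->
     rbr (b_ r : Sr C d) (b_ s) =
       \sum_(s <= m < r) b_ m * b_ (r + s - m - 1)).
Proof.
split; [|split].
- by move=> [|r] [|s] // _ _; apply: claim1.
- move=> [|r] s // _; rewrite claim2.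
  by rewrite addSn subSS subn0.
- by move=> r s hsr; apply: claim3.
Qed.
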